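(* Let $\Gamma$ and $\Delta$ be finite subsets of ${\sf Frm}$. Then $\vdash_{\sf WF_{N_2}}\bigwedge\Gamma\rightarrow\bigvee\Delta$ if and only if $\vdash_{\sf M_{Nec}}(\bigwedge\Gamma\rightarrow\bigvee\Delta)^\square$, i.e. $\vdash_{\sf M_{Nec}}\square(\bigwedge\Gamma^\square\supset\bigvee\Delta^\square)$.
   Context: Language: countably many atoms $p,q,\dots$, the constant $\bot$, and binary connectives $\wedge,\vee,\rightarrow$ ($\rightarrow$ is strict implication). ${\sf Frm}$ is the set of formulas built from atoms and $\bot$ with $\wedge,\vee,\rightarrow$; $A,B,C,D$ range over ${\sf Frm}$; $\supset$ denotes material implication. The Hilbert system ${\sf WF_{N_2}}$ over ${\sf Frm}$ has axiom schemes $A\rightarrow(A\vee B)$; $B\rightarrow(A\vee B)$; $(A\wedge B)\rightarrow A$; $(A\wedge B)\rightarrow B$; $A\wedge(B\vee C)\rightarrow(A\wedge B)\vee(A\wedge C)$; $A\rightarrow A$; $\bot\rightarrow A$; and rules (from theorems to a theorem): from $A$ and $A\rightarrow B$ infer $B$; from $A$ infer $B\rightarrow A$; from $A\rightarrow B$ and $B\rightarrow C$ infer $A\rightarrow C$; from $A\rightarrow B$ and $A\rightarrow C$ infer $A\rightarrow(B\wedge C)$; from $A\rightarrow C$ and $B\rightarrow C$ infer $(A\vee B)\rightarrow C$; from $A$ and $B$ infer $A\wedge B$; (${\sf N_2}$) from $C\rightarrow A\vee D$ and $C\wedge B\rightarrow D$ infer $(A\rightarrow B)\rightarrow(C\rightarrow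 D)$. $\vdash_{\sf WF_{N_2}}A$ means $A$ is a theorem of this system. $\bigwedge\Gamma$ and $\bigvee\Delta$ denote the conjunction and disjunction of the members (empty conjunction read as $\top:=\bot\rightarrow\bot$, empty disjunction as $\bot$). The modal language $\mathcal{L}_\square$ has atoms, $\bot$, binary $\wedge,\vee,\supset$ and unary $\square$. ${\sf M_{Nec}}$ is the smallest set of $\mathcal{L}_\square$-formulas containing all classical propositional tautologies and $\square(\bot\supset\bot)$, and closed under modus ponens, uniform substitution, and the rule RM: from $A\supset B$ infer $\square A\supset\square B$ (equivalently, the monotonic classical modal logic ${\sf M}$ extended by the necessitation rule). The $\square$-translation is: $p^\square=p$, $\bot^\square=\bot$, $(A\circ B)^\square=A^\square\circ B^\square$ for $\circ\in\{\wedge,\vee,\supset\}$, $(A\rightarrow B)^\square=\square(A^\square\supset B^\square)$; $\Gamma^\square=\{A^\square:A\in\Gamma\}$. *)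

(* Defs.v *)
From Stdlib Require Import List.
Import ListNotations.

Inductive frm : Type :=
| Atom : nat -> frm
| Bot : frm
| And : frm -> frm -> frm
| Or : frm -> frm -> frm
| Imp : frm -> frm -> frm.   (* strict implication "->" *)

Definition Top : frm := Imp Bot Bot.

Fixpoint bigAnd (l : list frm) : frm :=
  match l with
  | [] => Top
  | [A] => A
  | A :: l' => And A (bigAnd l')
  end.

Fixpoint bigOr (l : list frm) : frm :=
  match l with
  | [] => Bot
  | [A] => A
  | A :: l' => Or A (bigOr l')
  end.

Inductive WFN2 : frm -> Prop :=
| ax_or1 A B : WFN2 (Imp A (Or A B))
| ax_or2 A B : WFN2 (Imp B (Or A B))
| ax_and1 A B : WFN2 (Imp (And A B) A)
| ax_and2 A B : WFN2 (Imp (And A B) B)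
| ax_distr A B C : WFN2 (Imp (And A (Or B C)) (Or (And A B) (And A C)))
| ax_id A : WFN2 (Imp A A)
| ax_bot A : WFN2 (Imp Bot A)
| r_mp A B : WFN2 A -> WFN2 (Imp A B) -> WFN2 B
| r_af A B : WFN2 A -> WFN2 (Imp B A)
| r_trans A B C : WFN2 (Imp A B) -> WFN2 (Imp B C) -> WFN2 (Imp A C)
| r_andI A B C : WFN2 (Imp A B) -> WFN2 (Imp A C) -> WFN2 (Imp A (And B C))
| r_orE A B C : WFN2 (Imp A C) -> WFN2 (Imp B C) -> WFN2 (Imp (Or A B) C)
| r_adj A B : WFN2 A -> WFN2 B -> WFN2 (And A B)
| r_N2 A B C D : WFN2 (Imp C (Or A D)) -> WFN2 (Imp (And C B) D) ->
                 WFN2 (Imp (Imp A B) (Imp C D)).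

Inductive mform : Type :=
| MAtom : nat -> mform
| MBot : mform
| MAnd : mform -> mform -> mform
| MOr : mform -> mform -> mform
| MImp : mform -> mform -> mform
| MBox : mform -> mform.

Fixpoint meval (v : nat -> bool) (b : mform -> bool) (A : mform) : bool :=
  match A with
  | MAtom n => v n
  | MBot => false
  | MAnd A1 A2 => andb (meval v b A1) (meval v b A2)
  | MOr A1 A2 => orb (meval v b A1) (meval v b A2)
  | MImp A1 A2 => orb (negb (meval v b A1)) (meval v b A2)
  | MBox A1 => b (MBox A1)
  end.

Definition tautology (A : mform) : Prop :=
  forall (v : nat -> bool) (b : mform -> bool), meval v b A = true.

Fixpoint msubst (s : nat -> mform) (A : mform) : mform :=
  match A with
  | MAtom n => s n
  | MBot => MBot
  | MAnd A1 A2 => MAnd (msubst s A1) (msubst s A2)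
  | MOr A1 A2 => MOr (msubst s A1) (msubst s A2)
  | MImp A1 A2 => MImp (msubst s A1) (msubst s A2)
  | MBox A1 => MBox (msubst s A1)
  end.

Inductive MNec : mform -> Prop :=
| m_taut A : tautology A -> MNec A
| m_nec_top : MNec (MBox (MImp MBot MBot))
| m_mp A B : MNec A -> MNec (MImp A B) -> MNec B
| m_subst s A : MNec A -> MNec (msubst s A)
| m_RM A B : MNec (MImp A B) -> MNec (MImp (MBox A) (MBox B)).

Fixpoint boxtr (A : frm) : mform :=
  match A with
  | Atom n => MAtom n
  | Bot => MBot
  | And A1 A2 => MAnd (boxtr A1) (boxtr A2)
  | Or A1 A2 => MOr (boxtr A1) (boxtr A2)
  | Imp A1 A2 => MBox (MImp (boxtr A1) (boxtr A2))
  end.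

(* Main.v *)
Require Import Defs.
From Stdlib Require Import List Classical ClassicalEpsilon PeanoNat Cantor Lia.

Fixpoint ev {W : Type} (N : W -> (W -> Prop) -> Prop) (V : nat -> W -> Prop)
  (w : W) (A : mform) : Prop :=
  match A with
  | MAtom n => V n w
  | MBot => False
  | MAnd A1 A2 => ev N V w A1 /\ ev N V w A2
  | MOr A1 A2 => ev N V w A1 \/ ev N V w A2
  | MImp A1 A2 => ev N V w A1 -> ev N V w A2
  | MBox A1 => N w (fun x => ev N V x A1)
  end.

Definition valid (A : mform) : Prop :=
  forall (W : Type) (N : W -> (W -> Prop) -> Prop) (V : nat -> W -> Prop),
    (forall w (X Y : W -> Prop), (forall x, X x -> Y x) -> N w X -> N w Y) ->
    (forall w, N w (fun _ => True)) -> forall w, ev N V w A.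

Definition bool_of (P : Prop) : bool :=
  if excluded_middle_informative P then true else false.

Lemma bool_of_true P : bool_of P = true <-> P.
Proof. unfold bool_of; destruct (excluded_middle_informative P); split; congruence || tauto. Qed.

Lemma meval_ev {W} N V (w : W) A :
  meval (fun n => bool_of (V n w)) (fun B => bool_of (ev N V w B)) A = true <-> ev N V w A.
Proof.
  induction A; simpl.
  - apply bool_of_true.
  - split; congruence || tauto.
  - rewrite Bool.andb_true_iff; tauto.
  - rewrite Bool.orb_true_iff; tauto.
  - rewrite Bool.orb_true_iff, Bool.negb_true_iff, <- Bool.not_true_iff_false; tauto.
  - apply (bool_of_true (ev N V w (MBox A))).
Qed.

Lemma ev_subst {W} N V (w : W) s A
  (Nmon : forall w (X Y : W -> Prop), (forall x, X x -> Y x) -> N w X -> N w Y) :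
  ev N V w (msubst s A) <-> ev N (fun n x => ev N V x (s n)) w A.
Proof.
  revert w; induction A; intro w; simpl; try tauto;
  try (rewrite IHA1, IHA2; tauto).
  split; apply Nmon; intro x; apply IHA.
Qed.

Lemma MNec_sound A : MNec A -> valid A.
Proof.
  induction 1; intros W N V Nmon Nfull w.
  - apply meval_ev. apply H.
  - simpl. eapply Nmon; [|apply (Nfull w)]. simpl; tauto.
  - simpl in *. apply (IHMNec2 W N V Nmon Nfull w), IHMNec1; auto.
  - apply (proj2 (ev_subst N V w s A Nmon)); apply IHMNec; auto.
  - simpl. apply Nmon. intros x; apply (IHMNec W N V Nmon Nfull x).
Qed.

Definition extN {W} (N : W -> (W -> Prop) -> Prop) (x : option W) (X : option W -> Prop) : Prop :=
  match x with
  | Some v => N v (fun y => X (Some y))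
  | None => forall y, X (Some y)
  end.
Definition extV {W} (V : nat -> W -> Prop) n (x : option W) : Prop :=
  match x with Some v => V n v | None => False end.

Lemma ev_ext {W} N V (v : W) A
  (Nmon : forall w (X Y : W -> Prop), (forall x, X x -> Y x) -> N w X -> N w Y) :
  ev (extN N) (extV V) (Some v) A <-> ev N V v A.
Proof.
  revert v; induction A; intro v; simpl; try tauto.
  - rewrite IHA1, IHA2; tauto.
  - rewrite IHA1, IHA2; tauto.
  - rewrite IHA1, IHA2; tauto.
  - split; apply Nmon; intro x; apply IHA.
Qed.

Lemma valid_unbox A : valid (MBox A) -> valid A.
Proof.
  intros H W N V Nmon Nfull w.
  assert (Hm : forall w (X Y : option W -> Prop), (forall x, X x -> Y x) -> extN N w X -> extN N w Y).
  { intros [u|] X Y HXY; simpl; auto. apply Nmon; auto. }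
  assert (Hf : forall w, extN N w (fun _ => True)).
  { intros [u|]; simpl; auto. }
  specialize (H _ (extN N) (extV V) Hm Hf None). simpl in H.
  apply ev_ext; auto.
Qed.


Lemma box_all {W} (N : W -> (W -> Prop) -> Prop) w (P : W -> Prop)
  (Nmon : forall w (X Y : W -> Prop), (forall x, X x -> Y x) -> N w X -> N w Y)
  (Nfull : forall w, N w (fun _ => True)) : (forall x, P x) -> N w P.
Proof. intro H; eapply Nmon; [|apply (Nfull w)]; auto. Qed.

Lemma WFN2_sound C : WFN2 C -> valid (boxtr C).
Proof.
  induction 1; intros W N V Nmon Nfull w; simpl;
  try (apply box_all; auto; intro x; simpl; tauto).
  - apply valid_unbox in IHWFN2_2.
    specialize (IHWFN2_2 W N V Nmon Nfull w); simpl in IHWFN2_2.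
    apply IHWFN2_2, IHWFN2_1; auto.
  - apply valid_unbox in IHWFN2_1; apply valid_unbox in IHWFN2_2.
    apply box_all; auto; intro x;
    specialize (IHWFN2_1 W N V Nmon Nfull x); specialize (IHWFN2_2 W N V Nmon Nfull x);
    simpl in *; tauto.
  - apply valid_unbox in IHWFN2_1; apply valid_unbox in IHWFN2_2.
    apply box_all; auto; intro x;
    specialize (IHWFN2_1 W N V Nmon Nfull x); specialize (IHWFN2_2 W N V Nmon Nfull x);
    simpl in *; tauto.
  - apply valid_unbox in IHWFN2_1; apply valid_unbox in IHWFN2_2.
    apply box_all; auto; intro x;
    specialize (IHWFN2_1 W N V Nmon Nfull x); specialize (IHWFN2_2 W N V Nmon Nfull x);
    simpl in *; tauto.
  - split; [apply IHWFN2_1|apply IHWFN2_2]; auto.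
  - apply valid_unbox in IHWFN2_1; apply valid_unbox in IHWFN2_2.
    apply box_all; auto; intro x. apply Nmon. intro y.
    specialize (IHWFN2_1 W N V Nmon Nfull y); specialize (IHWFN2_2 W N V Nmon Nfull y);
    simpl in *; tauto.
Qed.

Inductive W2 : frm -> Prop :=
| w_or1 A B : W2 (Imp A (Or A B))
| w_or2 A B : W2 (Imp B (Or A B))
| w_and1 A B : W2 (Imp (And A B) A)
| w_and2 A B : W2 (Imp (And A B) B)
| w_distr A B C : W2 (Imp (And A (Or B C)) (Or (And A B) (And A C)))
| w_id A : W2 (Imp A A)
| w_bot A : W2 (Imp Bot A)
| w_af A B : W2 A -> W2 (Imp B A)
| w_trans A B C : W2 (Imp A B) -> W2 (Imp B C) -> W2 (Imp A C)
| w_andI A B C : W2 (Imp A B) -> W2 (Imp A C) -> W2 (Imp A (And B C))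
| w_orE A B C : W2 (Imp A C) -> W2 (Imp B C) -> W2 (Imp (Or A B) C)
| w_adj A B : W2 A -> W2 B -> W2 (And A B)
| w_N2 A B C D : W2 (Imp C (Or A D)) -> W2 (Imp (And C B) D) ->
                 W2 (Imp (Imp A B) (Imp C D)).

Lemma W2_WFN2 C : W2 C -> WFN2 C.
Proof. induction 1; try (econstructor; eauto; fail). Qed.

Lemma mnec_taut0 Y : (forall v b, meval v b Y = true) -> MNec Y.
Proof. intro H; apply m_taut; exact H. Qed.

Lemma mnec_taut1 X Y : (forall v b, meval v b X = true -> meval v b Y = true) ->
  MNec X -> MNec Y.
Proof.
  intros H HX. apply (m_mp X); auto. apply m_taut. intros v b; simpl.
  specialize (H v b). destruct (meval v b X), (meval v b Y); simpl; auto.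
Qed.

Lemma mnec_taut2 X1 X2 Y :
  (forall v b, meval v b X1 = true -> meval v b X2 = true -> meval v b Y = true) ->
  MNec X1 -> MNec X2 -> MNec Y.
Proof.
  intros H H1 H2. apply (m_mp X2); auto. apply (m_mp X1); auto. apply m_taut. intros v b; simpl.
  specialize (H v b). destruct (meval v b X1), (meval v b X2), (meval v b Y); simpl; auto.
Qed.

Lemma mnec_nec X : MNec X -> MNec (MBox X).
Proof.
  intro H. apply (m_mp (MBox (MImp MBot MBot))). apply m_nec_top.
  apply m_RM. apply (mnec_taut1 X); [|exact H]. intros v b HX; simpl; rewrite HX; reflexivity.
Qed.

Definition T (C : frm) : Prop :=
  match C with
  | Imp A B => MNec (MImp (boxtr A) (boxtr B))
  | _ => MNec (boxtr C)
  end.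

Lemma T_MNec C : T C -> MNec (boxtr C).
Proof. destruct C; simpl; auto. apply mnec_nec. Qed.

Ltac bt := intros v b; simpl;
  repeat match goal with |- context [meval v b ?X] => destruct (meval v b X) end;
  simpl; auto.

Lemma W2_T C : W2 C -> T C.
Proof.
  induction 1; simpl; try (apply mnec_taut0; bt; fail).
  - apply (mnec_taut1 (boxtr A)). 2: apply T_MNec; auto. bt.
  - eapply mnec_taut2; [|exact IHW2_1|exact IHW2_2]; bt.
  - eapply mnec_taut2; [|exact IHW2_1|exact IHW2_2]; bt.
  - eapply mnec_taut2; [|exact IHW2_1|exact IHW2_2]; bt.
  - apply T_MNec in IHW2_1; apply T_MNec in IHW2_2.
    eapply mnec_taut2; [|exact IHW2_1|exact IHW2_2]; bt.
  - apply m_RM. eapply mnec_taut2; [|exact IHW2_1|exact IHW2_2]; bt.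
Qed.


Definition le (A B : frm) : Prop := W2 (Imp A B).

Fixpoint enc (A : frm) : nat :=
  match A with
  | Atom n => to_nat (0, n)
  | Bot => to_nat (1, 0)
  | And a b => to_nat (2, to_nat (enc a, enc b))
  | Or a b => to_nat (3, to_nat (enc a, enc b))
  | Imp a b => to_nat (4, to_nat (enc a, enc b))
  end.

Lemma to_nat_inj p q : to_nat p = to_nat q -> p = q.
Proof. intro H. rewrite <- (cancel_of_to p), <- (cancel_of_to q), H. reflexivity. Qed.

Lemma enc_inj A B : enc A = enc B -> A = B.
Proof.
  revert B; induction A; intros [] H; cbn [enc] in H; apply to_nat_inj in H;
  try discriminate; try reflexivity;
  apply pair_equal_spec in H; destruct H as [_ H];
  try (subst; reflexivity);
  apply to_nat_inj in H; apply pair_equal_spec in H; destruct H as [H1 H2];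
  f_equal; auto.
Qed.

Definition enum (n : nat) : frm := epsilon (inhabits Bot) (fun f => enc f = n).

Lemma enum_enc A : enum (enc A) = A.
Proof.
  apply enc_inj. unfold enum. apply (epsilon_spec (inhabits Bot) (fun f => enc f = enc A)).
  exists A; reflexivity.
Qed.

Record pf (G : frm -> Prop) : Prop := {
  pf_up : forall A B, G A -> le A B -> G B;
  pf_conj : forall A B, G A -> G B -> G (And A B);
  pf_top : G Top;
  pf_bot : ~ G Bot;
  pf_prime : forall A B, G (Or A B) -> G A \/ G B }.

Definition step (p : frm * frm) (f : frm) : frm * frm :=
  let (a, b) := p in
  if excluded_middle_informative (le (And a f) b) then (a, Or b f) else (And a f, b).

Fixpoint sq (C E : frm) (n : nat) : frm * frm :=
  match n with
  | 0 => (C, E)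
  | S n => step (sq C E n) (enum n)
  end.

Lemma le_refl A : le A A. Proof. apply w_id. Qed.
Lemma le_trans A B C : le A B -> le B C -> le A C. Proof. apply w_trans. Qed.


Lemma sq_inv C E (HCE : ~ le C E) n : ~ le (fst (sq C E n)) (snd (sq C E n)).
Proof.
  induction n; simpl; auto.
  destruct (sq C E n) as [a b]; simpl in *. unfold step.
  destruct (excluded_middle_informative (le (And a (enum n)) b)) as [H|H]; simpl; auto.
  intro H'. apply IHn; auto.
  apply le_trans with (And a (Or b (enum n))). apply w_andI; auto. apply le_refl.
  apply le_trans with (Or (And a b) (And a (enum n))). apply w_distr.
  apply w_orE; auto. apply w_and2.
Qed.

Lemma sq_step C E n : le (fst (sq C E (S n))) (fst (sq C E n)) /\ le (snd (sq C E n)) (snd (sq C E (S n))).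
Proof.
  simpl. destruct (sq C E n) as [a b]; simpl. unfold step.
  destruct (excluded_middle_informative (le (And a (enum n)) b)); simpl;
  split; try apply le_refl; try apply w_or1; apply w_and1.
Qed.

Lemma sq_mono C E n m : n <= m -> le (fst (sq C E m)) (fst (sq C E n)) /\ le (snd (sq C E n)) (snd (sq C E m)).
Proof.
  induction 1. split; apply le_refl.
  destruct IHle; destruct (sq_step C E m); split; eapply le_trans; eauto.
Qed.

Definition Hf (C E f : frm) : Prop := exists n, le (fst (sq C E n)) f.

Lemma Hf_or_b C E f : Hf C E f \/ exists m, le f (snd (sq C E m)).
Proof.
  pose (n := enc f).
  assert (Hs : sq C E (S n) = step (sq C E n) f) by (simpl; unfold n; rewrite enum_enc; reflexivity).
  destruct (sq C E n) as [a b] eqn:Eq. unfold step in Hs.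
  destruct (excluded_middle_informative (le (And a f) b)).
  - right. exists (S n). rewrite Hs. apply w_or2.
  - left. exists (S n). rewrite Hs. apply w_and2.
Qed.

Lemma Hf_pf C E (HCE : ~ le C E) : pf (Hf C E).
Proof.
  constructor.
  - intros A B [n H] H'. exists n. eapply le_trans; eauto.
  - intros A B [n H] [m H']. exists (Nat.max n m).
    destruct (sq_mono C E n (Nat.max n m)) as [H1 _]. lia.
    destruct (sq_mono C E m (Nat.max n m)) as [H2 _]. lia.
    apply w_andI; [apply (le_trans _ _ _ H1 H) | apply (le_trans _ _ _ H2 H')].
  - exists 0. apply w_af. apply w_bot.
  - intros [n H]. apply (sq_inv C E HCE n). eapply le_trans; eauto. apply w_bot.
  - intros A B [n H].
    destruct (Hf_or_b C E A) as [?|[i Hi]]; auto.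
    destruct (Hf_or_b C E B) as [?|[j Hj]]; auto.
    exfalso. pose (k := Nat.max n (Nat.max i j)).
    apply (sq_inv C E HCE k).
    destruct (sq_mono C E n k) as [H1 _]. lia.
    destruct (sq_mono C E i k) as [_ H2]. lia.
    destruct (sq_mono C E j k) as [_ H3]. lia.
    eapply le_trans. eapply le_trans. apply H1. apply H.
    apply w_orE; eapply le_trans; eauto.
Qed.

Lemma Hf_C C E : Hf C E C. Proof. exists 0. apply le_refl. Qed.
Lemma Hf_E C E (HCE : ~ le C E) : ~ Hf C E E.
Proof.
  intros [n H]. apply (sq_inv C E HCE n). eapply le_trans. apply H.
  destruct (sq_mono C E 0 n) as [_ H2]. lia. exact H2.
Qed.

Lemma lindenbaum C E : ~ le C E -> exists G, pf G /\ G C /\ ~ G E.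
Proof. intro H. exists (Hf C E). split; [apply Hf_pf|split;[apply Hf_C|apply Hf_E]]; auto. Qed.


Definition CW := { G : frm -> Prop | pf G }.
Definition CN (G : CW) (X : CW -> Prop) : Prop :=
  exists A B, proj1_sig G (Imp A B) /\ forall H : CW, (proj1_sig H A -> proj1_sig H B) -> X H.
Definition CV (n : nat) (G : CW) : Prop := proj1_sig G (Atom n).

Lemma CN_mon : forall w (X Y : CW -> Prop), (forall x, X x -> Y x) -> CN w X -> CN w Y.
Proof. intros w X Y HXY [A [B [H1 H2]]]. exists A, B. split; auto. Qed.

Lemma CN_full : forall w, CN w (fun _ => True).
Proof. intros [G HG]. exists Bot, Bot. split; auto. apply (pf_top _ HG). Qed.

Lemma sep A B : (forall H : CW, proj1_sig H A -> proj1_sig H B) -> le A B.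
Proof.
  intro Hyp. apply NNPP. intro Hn. destruct (lindenbaum _ _ Hn) as [G [HG [HA HB]]].
  apply HB. apply (Hyp (exist _ G HG)). exact HA.
Qed.

Lemma truth C : forall G : CW, ev CN CV G (boxtr C) <-> proj1_sig G C.
Proof.
  induction C; intros [G HG]; simpl.
  - unfold CV; simpl; tauto.
  - split; [tauto| apply (pf_bot _ HG)].
  - rewrite IHC1, IHC2; simpl. split.
    + intros [H1 H2]; apply (pf_conj _ HG); auto.
    + intro H; split; eapply (pf_up _ HG); eauto; [apply w_and1|apply w_and2].
  - rewrite IHC1, IHC2; simpl. split.
    + intros [H1|H2]; eapply (pf_up _ HG); eauto; [apply w_or1|apply w_or2].
    + intro H; apply (pf_prime _ HG); auto.
  - split.
    + intros [A [B [H1 H2]]].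
      assert (K : forall H : CW, (proj1_sig H A -> proj1_sig H B) -> proj1_sig H C1 -> proj1_sig H C2).
      { intros H HAB. specialize (H2 H HAB). simpl in H2. rewrite IHC1, IHC2 in H2. exact H2. }
      apply (pf_up _ HG _ _ H1). apply w_N2.
      * apply sep. intros [H HH] h1; simpl in *.
        destruct (classic (H A)) as [hA|hA].
        -- eapply (pf_up _ HH); [exact hA|apply w_or1].
        -- eapply (pf_up _ HH); [|apply w_or2]. apply (K (exist _ H HH)); simpl; tauto.
      * apply sep. intros [H HH] h1; simpl in *.
        apply (K (exist _ H HH)); simpl.
        -- intros _. eapply (pf_up _ HH); [exact h1|apply w_and2].
        -- eapply (pf_up _ HH); [exact h1|apply w_and1].
    + intro H. exists C1, C2. split; auto. intros H' HH'.
      simpl. rewrite IHC1, IHC2. exact HH'.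
Qed.

Lemma complete C E : valid (MImp (boxtr C) (boxtr E)) -> W2 (Imp C E).
Proof.
  intro Hv. apply NNPP. intro Hn. destruct (lindenbaum _ _ Hn) as [G [HG [HC HE]]].
  specialize (Hv CW CN CV CN_mon CN_full (exist _ G HG)). simpl in Hv.
  rewrite !truth in Hv. simpl in Hv. auto.
Qed.

Lemma main C E : WFN2 (Imp C E) <-> MNec (boxtr (Imp C E)).
Proof.
  split; intro H.
  - apply WFN2_sound in H. simpl in H. apply valid_unbox in H.
    apply complete, W2_T in H. simpl. apply mnec_nec. exact H.
  - apply MNec_sound in H. simpl in H. apply valid_unbox in H.
    apply W2_WFN2, complete, H.
Qed.

Theorem theorem4p2 (Gamma Delta : list frm) :
  WFN2 (Imp (bigAnd Gamma) (bigOr Delta)) <->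
  MNec (boxtr (Imp (bigAnd Gamma) (bigOr Delta))).
Proof. apply main. Qed.
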